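(* Let $X = [X_1 \; X_2] \in \mathbb{R}^{N\times P}$ with $X_1 \in \mathbb{R}^{N\times P_1}$, $X_2\in\mathbb{R}^{N\times P_2}$, $P = P_1+P_2$, and suppose the $N$-vector of ones $\mathbf{1}$ lies in the column span of $X_1$. Consider the hierarchical normal linear regression $$\mathbf{Y}\mid \boldsymbol\beta,\Phi \sim N(X_1\boldsymbol\beta_1 + X_2\boldsymbol\beta_2,\Phi),\quad \boldsymbol\beta_1\sim N(0,C),\quad \boldsymbol\beta_2\mid\Sigma\sim N(0,\Sigma),\quad \Sigma\sim f(\Sigma),\ \Phi\sim f(\Phi),$$ where $\Sigma\in\mathbb{R}^{P_2\times P_2}$ is positive definite and $\Phi = \mathrm{diag}(\phi_1^2,\dots,\phi_N^2)$ is diagonal and positive definite; in the Bayesian setting the prior densities are such that the posterior is proper. Let $$W = XVX'\Phi^{-1},\qquad V = \left(X'\Phi^{-1}X + \begin{bmatrix} C^{-1} & 0\\ 0 & \Sigma^{-1}\end{bmatrix}\right)^{-1},$$ with $C^{-1}$ taken to be the zero matrix, and write $w_{ij}$ for the $(i,j)$ entry of $W$. For $i\in\{1,\dots,N\}$, let $x_i'$ be the $i$-th row of $X$, let $B_i = \{j\in\{1,\dots,N\}: x_j = x_i,\ \phi_j=\phi_i\}$ and $L_i = \{1,\dots,N\}\setminus B_i$, and define the shrinkage factor $b_{iB_i} = \sum_{j\in B_i} w_{ij}$ and the pooling factor $b_{iL_i} = \sum_{j\in L_i} w_{ij}$. Then for every $i$, $0 < b_{iB_i}\le 1$ and $0\le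 b_{iL_i} < 1$.
   Context: $W$ is defined for given values of $\Sigma$ and $\Phi$, and $V$ is assumed to exist (the displayed matrix is invertible). $B_i$ is the ''borrower cluster'' of observation $i$ (rows with identical covariates and identical noise variance) and $L_i$ the set of ''lenders''. *)

(* Defs.v *)
From HB Require Import structures.
From mathcomp Require Import all_boot all_order all_algebra.
Set Implicit Arguments. Unset Strict Implicit. Unset Printing Implicit Defensive.
Import Order.TTheory GRing.Theory Num.Theory.
Local Open Scope ring_scope.

Section Defs.
Variable R : realFieldType.

Definition design N P1 P2 (X1 : 'M[R]_(N, P1)) (X2 : 'M[R]_(N, P2))
  : 'M[R]_(N, P1 + P2) := row_mx X1 X2.

Definition Phi_mx N (phi : 'I_N -> R) : 'M[R]_N := diag_mx (\row_i (phi i ^+ 2)).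

Definition posdef n (S : 'M[R]_n) : Prop :=
  S^T = S /\ forall v : 'cV[R]_n, v != 0 -> 0 < (v^T *m S *m v) ord0 ord0.

Definition prec_mx N P1 P2 (X1 : 'M[R]_(N, P1)) (X2 : 'M[R]_(N, P2))
  (Sigma : 'M[R]_P2) (phi : 'I_N -> R) : 'M[R]_(P1 + P2) :=
  (design X1 X2)^T *m invmx (Phi_mx phi) *m design X1 X2
  + block_mx (0 : 'M[R]_(P1, P1)) 0 0 (invmx Sigma).

Definition V_mx N P1 P2 (X1 : 'M[R]_(N, P1)) (X2 : 'M[R]_(N, P2))
  (Sigma : 'M[R]_P2) (phi : 'I_N -> R) : 'M[R]_(P1 + P2) :=
  invmx (prec_mx X1 X2 Sigma phi).

Definition W_mx N P1 P2 (X1 : 'M[R]_(N, P1)) (X2 : 'M[R]_(N, P2))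
  (Sigma : 'M[R]_P2) (phi : 'I_N -> R) : 'M[R]_N :=
  design X1 X2 *m V_mx X1 X2 Sigma phi *m (design X1 X2)^T *m invmx (Phi_mx phi).

Definition borrowers N P1 P2 (X1 : 'M[R]_(N, P1)) (X2 : 'M[R]_(N, P2))
  (phi : 'I_N -> R) (i : 'I_N) : {set 'I_N} :=
  [set j | (row j (design X1 X2) == row i (design X1 X2)) && (phi j == phi i)].

Definition lenders N P1 P2 (X1 : 'M[R]_(N, P1)) (X2 : 'M[R]_(N, P2))
  (phi : 'I_N -> R) (i : 'I_N) : {set 'I_N} :=
  ~: borrowers X1 X2 phi i.

Definition shrinkage N P1 P2 (X1 : 'M[R]_(N, P1)) (X2 : 'M[R]_(N, P2))
  (Sigma : 'M[R]_P2) (phi : 'I_N -> R) (i : 'I_N) : R :=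
  \sum_(j in borrowers X1 X2 phi i) W_mx X1 X2 Sigma phi i j.

Definition pooling N P1 P2 (X1 : 'M[R]_(N, P1)) (X2 : 'M[R]_(N, P2))
  (Sigma : 'M[R]_P2) (phi : 'I_N -> R) (i : 'I_N) : R :=
  \sum_(j in lenders X1 X2 phi i) W_mx X1 X2 Sigma phi i j.
End Defs.

(* Main.v *)
Require Import Defs.
From HB Require Import structures.
From mathcomp Require Import all_boot all_order all_algebra.
From mathcomp Require Import ring lra.
Import Order.TTheory GRing.Theory Num.Theory.
Local Open Scope ring_scope.

Lemma invPhi (R : realFieldType) N (phi : 'I_N -> R) :
  (forall i, 0 < phi i) ->
  invmx (Phi_mx phi) = diag_mx (\row_i (phi i ^+ 2)^-1).
Proof.
move=> hp.
have h : Phi_mx phi *m diag_mx (\row_i (phi i ^+ 2)^-1) = 1%:M.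
  rewrite /Phi_mx mulmx_diag; apply/matrixP => i j; rewrite !mxE.
  case: eqVneq => [->|] //=; rewrite ?mulr1n ?mulr0n //.
  by rewrite divff // expf_neq0 // gt_eqF.
have [u _] := mulmx1_unit h.
by rewrite -[RHS]mul1mx -(mulVmx u) -mulmxA h mulmx1.
Qed.

Lemma Sigma_unit (R : realFieldType) n (S : 'M[R]_n) : posdef S -> S \in unitmx.
Proof.
move=> [hT hp].
rewrite -row_free_unit -kermx_eq0; apply/eqP/row_matrixP => k; rewrite row0.
set v := row k (kermx S).
have hv : v *m S = 0 by rewrite /v -row_mul mulmx_ker row0.
apply/eqP/negPn/negP => nz.
have nz' : v^T != 0.
  apply: contra nz => /eqP h; apply/eqP.
  by rewrite -[v]trmxK h trmx0.
have := hp _ nz'; by rewrite trmxK hv mul0mx mxE ltxx.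
Qed.

Arguments invPhi [R N phi].
Arguments Sigma_unit [R n S].
Lemma Sigma_inv_psd (R : realFieldType) n (S : 'M[R]_n) : posdef S ->
  forall v : 'cV_n, 0 <= (v^T *m invmx S *m v) 0 0.
Proof.
move=> hS v; have hU := Sigma_unit hS; case: hS => hT hp.
set w := invmx S *m v.
have hv : v = S *m w by rewrite /w mulmxA mulmxV // mul1mx.
have -> : v^T *m invmx S *m v = w^T *m S *m w.
  by rewrite -mulmxA -/w {1}hv trmx_mul hT.
case: (eqVneq w 0) => [->|nz]; first by rewrite mulmx0 mxE.
exact: ltW (hp _ nz).
Qed.

Arguments Sigma_inv_psd [R n S].
Lemma quad_dec (R : realFieldType) N P1 P2 (X1 : 'M[R]_(N, P1)) (X2 : 'M[R]_(N, P2))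
  (Sigma : 'M[R]_P2) (phi : 'I_N -> R) :
  (forall i, 0 < phi i) -> forall u : 'cV_(P1 + P2),
  (u^T *m prec_mx X1 X2 Sigma phi *m u) 0 0 =
  \sum_j ((design X1 X2 *m u) j 0) ^+ 2 * (phi j ^+ 2)^-1
  + ((dsubmx u)^T *m invmx Sigma *m dsubmx u) 0 0.
Proof.
move=> hp u; rewrite /prec_mx invPhi // mulmxDr mulmxDl mxE; congr (_ + _).
  have -> : u^T *m ((design X1 X2)^T *m diag_mx (\row_i (phi i ^+ 2)^-1) *m design X1 X2) *m u
    = (design X1 X2 *m u)^T *m diag_mx (\row_i (phi i ^+ 2)^-1) *m (design X1 X2 *m u).
    by rewrite trmx_mul !mulmxA.
  rewrite mul_mx_diag mxE; apply: eq_bigr => j _; rewrite !mxE.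
  by rewrite expr2 mulrAC.
rewrite -[in LHS](vsubmxK u).
by rewrite tr_col_mx mul_row_block !mulmx0 !addr0 add0r mul_row_col mul0mx add0r.
Qed.

Arguments quad_dec [R N P1 P2 X1 X2 Sigma phi].
Theorem theorem2 (R : realFieldType) (N P1 P2 : nat)
  (X1 : 'M[R]_(N, P1)) (X2 : 'M[R]_(N, P2))
  (Sigma : 'M[R]_P2) (phi : 'I_N -> R) :
  (exists b : 'cV[R]_P1, X1 *m b = const_mx 1) ->
  posdef Sigma ->
  (forall i, 0 < phi i) ->
  prec_mx X1 X2 Sigma phi \in unitmx ->
  forall i : 'I_N,
    0 < shrinkage X1 X2 Sigma phi i <= 1 /\
    0 <= pooling X1 X2 Sigma phi i < 1.
Proof.
move=> [b hb] hS hp hU i.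
have hD := invPhi hp.
set d := \row_j (phi j ^+ 2)^-1 in hD.
set X := design X1 X2.
set M := prec_mx X1 X2 Sigma phi.
set e : 'cV_(P1 + P2) := col_mx b 0.
have hXe : X *m e = const_mx 1 by rewrite /X /design mul_row_col mulmx0 addr0.
have hMe : M *m e = X^T *m diag_mx d *m const_mx 1.
  rewrite /M /prec_mx hD mulmxDl -/X -(mulmxA _ X) hXe mul_block_col.
  by rewrite !mul0mx !mulmx0 !addr0 col_mx0 addr0.
have hMTe : M^T *m e = X^T *m diag_mx d *m const_mx 1.
  rewrite /M /prec_mx hD raddfD /= !trmx_mul trmxK tr_diag_mx tr_block_mx !trmx0.
  rewrite mulmxDl -/X mulmxA -(mulmxA _ X) hXe mul_block_col.
  by rewrite !mul0mx !mulmx0 !addr0 col_mx0 addr0.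
set V := V_mx X1 X2 Sigma phi.
have hVM : V *m M = 1%:M by rewrite /V /V_mx mulVmx.
have hMV : M *m V = 1%:M by rewrite /V /V_mx mulmxV.
set W := W_mx X1 X2 Sigma phi.
have hW1 : W *m (const_mx 1 : 'cV_N) = const_mx 1.
  rewrite /W /W_mx hD -/X -/V -!mulmxA (mulmxA X^T) -hMe.
  by rewrite (mulmxA V) hVM mul1mx hXe.
have hsum : \sum_j W i j = 1.
  have h : (W *m (const_mx 1 : 'cV_N)) i 0 = 1 by rewrite hW1 mxE.
  rewrite -h [RHS]mxE.
  by apply: eq_bigr => j _; rewrite [const_mx 1 _ _]mxE mulr1.
set B := borrowers X1 X2 phi i.
have hsp : shrinkage X1 X2 Sigma phi i + pooling X1 X2 Sigma phi i = 1.
  rewrite -hsum (bigID (mem B)) /=; congr (_ + _).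
  by apply: eq_bigl => j; rewrite /lenders inE.
set G := X *m V *m X^T.
have hWij j : W i j = G i j * (phi j ^+ 2)^-1.
  by rewrite /W /W_mx hD mul_mx_diag !mxE.
have hGrow j : G i j = (row i X *m V *m (row j X)^T) 0 0.
  rewrite /G -row_mul [LHS]mxE [RHS]mxE; apply: eq_bigr => k _; rewrite !mxE.
  by [].
have hB j : j \in B -> row j X = row i X /\ phi j = phi i.
  by rewrite /B /borrowers inE => /andP[/eqP -> /eqP ->].
have iB : i \in B by rewrite /B /borrowers inE !eqxx.
set q := G i i.
have hsh : shrinkage X1 X2 Sigma phi i = q * (phi i ^+ 2)^-1 * #|B|%:R.
  rewrite /shrinkage -/B -/W (eq_bigr (fun _ => W i i)).
    by rewrite sumr_const hWij mulr_natr.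
  move=> j /hB [hr hph]; rewrite !hWij hph !hGrow hr.
  by [].
set x := row i X.
set u := V *m x^T.
have hq : (x *m u) 0 0 = q by rewrite /u mulmxA /q hGrow.
have hQ : (u^T *m M *m u) 0 0 = q.
  rewrite -mulmxA {2}/u (mulmxA M) hMV mul1mx -trmx_mul mxE.
  by [].
have hdec := quad_dec (X1:=X1) (X2:=X2) (Sigma:=Sigma) hp u.
rewrite -/X -/M hQ in hdec.
set s := ((dsubmx u)^T *m invmx Sigma *m dsubmx u) 0 0 in hdec.
have hs0 : 0 <= s := Sigma_inv_psd hS _.
set y := X *m u in hdec.
have hyB j : j \in B -> y j 0 = q.
  move=> /hB [hr _]; rewrite -hq /y /x -hr -row_mul [RHS]mxE.
  by [].
have hF0 j : 0 <= y j 0 ^+ 2 / phi j ^+ 2.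
  by apply: mulr_ge0; [exact: sqr_ge0 | rewrite invr_ge0 exprn_ge0 // ltW].
have hT0 : 0 <= \sum_j y j 0 ^+ 2 / phi j ^+ 2 by apply: sumr_ge0 => j _.
have hXe1 : (x *m e) 0 0 = 1 by rewrite /x -row_mul hXe !mxE.
have hMu : M *m u = x^T by rewrite /u mulmxA hMV mul1mx.
have hx : x = u^T *m M^T by rewrite -trmx_mul hMu trmxK.
have hq0 : q != 0.
  apply/eqP => q0.
  have hT : \sum_j y j 0 ^+ 2 / phi j ^+ 2 = 0 by lra.
  have hy : y = 0.
    apply/matrixP => j k; rewrite (ord1 k) [RHS]mxE.
    have := psumr_eq0P (fun j _ => hF0 j) hT (i:=j) isT.
    move/eqP; rewrite mulf_eq0 invr_eq0 !expf_eq0 /= (gt_eqF (hp j)) orbF.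
    by move/eqP.
  move: hXe1; rewrite hx -mulmxA hMTe !mulmxA -trmx_mul -/y hy trmx0 !mul0mx mxE.
  by move=> h; move: (@oner_neq0 R); rewrite -h eqxx.
set r := \sum_(j | j \notin B) y j 0 ^+ 2 / phi j ^+ 2.
have hr0 : 0 <= r by apply: sumr_ge0 => j _.
have hsplit : \sum_j y j 0 ^+ 2 / phi j ^+ 2 = (q ^+ 2 / phi i ^+ 2) *+ #|B| + r.
  rewrite (bigID (mem B)) /=; congr (_ + _); rewrite -sumr_const.
  by apply: eq_bigr => j jB; rewrite hyB //; have [_ ->] := hB j jB.
have hpo : pooling X1 X2 Sigma phi i = 1 - shrinkage X1 X2 Sigma phi i by lra.
rewrite hpo hsh; rewrite hsplit -mulr_natr in hdec.
have ha : 0 < (phi i ^+ 2)^-1 by rewrite invr_gt0 exprn_gt0.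
have hn : 1 <= #|B|%:R :> R.
  by rewrite ler1n; apply/card_gt0P; exists i.
move: ha hn hdec hq0; set a := (phi i ^+ 2)^-1; set n := #|B|%:R => ha hn hdec hq0.
have hq2 : 0 < q * q by rewrite lt0r mulf_neq0 //= -expr2 sqr_ge0.
have h1 : 0 <= q ^+ 2 * a * n.
  apply: mulr_ge0; last by apply: le_trans hn.
  by apply: mulr_ge0; [exact: sqr_ge0 | exact: ltW].
have hqp : 0 < q.
  by rewrite lt_neqAle eq_sym hq0 /=; lra.
have h2 : q * (1 - q * a * n) = r + s.
  by rewrite mulrBr mulr1 {1}hdec; ring.
have h3 : 0 <= 1 - q * a * n by rewrite -(pmulr_rge0 _ hqp) h2; lra.
have h4 : 0 < q * a * n.
  by apply: mulr_gt0; [exact: mulr_gt0 | exact: lt_le_trans ltr01 hn].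
by split; apply/andP; split; lra.
Qed.
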